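(* Let $\{\mathcal H,\gamma,\ell,\ell^{(2)}\}$ be null metric hypersurface data, $\theta$ any one-form and $f$ any smooth function on $\mathcal H$. Let $X$ be the vector field $X^b=P^{bc}\theta_c$. Then $$n^b(\mathcal L_X\gamma)_{ab}=(\mathcal L_n\theta)_a-\mathcal L_n\big(\theta(n)\big)\ell_a-2\big(\theta(n)s_a+P^{bc}U_{ab}\theta_c\big),\qquad n^b(\mathcal L_{fn}\gamma)_{ab}=0.$$
   Context: Metric hypersurface data: $\mathcal H$ smooth $\mathfrak n$-manifold with symmetric $(0,2)$-tensor $\gamma$, one-form $\ell$, function $\ell^{(2)}$ such that $\mathcal A((W,a),(V,b))=\gamma(W,V)+a\ell(V)+b\ell(W)+ab\ell^{(2)}$ is non-degenerate on each $T_p\mathcal H\times\mathbb R$. $P$ (symmetric $(2,0)$), $n$, $n^{(2)}$ defined by $\gamma_{ab}n^b+n^{(2)}\ell_a=0$, $\ell_an^a+n^{(2)}\ell^{(2)}=1$, $P^{ab}\ell_b+\ell^{(2)}n^a=0$, $P^{ac}\gamma_{cb}+\ell_bn^a=\delta^a_b$; null means $n^{(2)}=0$. $U_{ab}=\frac12(\mathcal L_n\gamma)_{ab}$ (null case), $F=\frac12d\ell$, $s_a=n^bF_{ba}$, $\theta(n)=\theta_an^a$. *)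

(* Defs.v *)
(* Local coordinate model of the hypersurface H:
   a chart identifies a neighbourhood of any point with R^d ('rV[R]_d).
   Tensor fields are given by their component functions. *)
From HB Require Import structures.
From mathcomp Require Import all_boot all_order all_algebra.
From mathcomp Require Import all_classical all_reals all_analysis.
Set Implicit Arguments. Unset Strict Implicit. Unset Printing Implicit Defensive.
Import Order.TTheory GRing.Theory Num.Theory.
Import numFieldNormedType.Exports.
Local Open Scope ring_scope.

Section Defs.
Variables (R : realType) (d : nat).
Local Notation pt := 'rV[R]_d.

Definition sfield := pt -> R.
Definition vfield := 'I_d -> sfield.
Definition tfield := 'I_d -> 'I_d -> sfield.

Definition partial (i : 'I_d) (f : sfield) : sfield :=
  fun x => 'D_(delta_mx 0 i) f x.

Fixpoint Ck (k : nat) (f : sfield) : Prop :=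
  match k with
  | 0 => continuous f
  | k.+1 => (forall x, differentiable f x) /\ forall i, Ck k (partial i f)
  end.
Definition smooth (f : sfield) : Prop := forall k, Ck k f.

Definition lie0 (V : vfield) (f : sfield) : sfield :=
  fun x => \sum_c V c x * partial c f x.
Definition lie1 (V : vfield) (th : vfield) : vfield :=
  fun a x => \sum_c (V c x * partial c (th a) x + th c x * partial a (V c) x).
Definition lie2 (V : vfield) (T : tfield) : tfield :=
  fun a b x => \sum_c (V c x * partial c (T a b) x
                       + T c b x * partial a (V c) x + T a c x * partial b (V c) x).

(* the matrix of the bilinear form A on T_pH x R in coordinates *)
Definition Amx (gam : tfield) (ell : vfield) (ell2 : sfield) (x : pt)
  : 'M[R]_(d + 1) :=
  block_mx (\matrix_(i, j) gam i j x) (\col_i ell i x)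
           (\row_j ell j x) (ell2 x)%:M.

Definition hypersurface_data (gam : tfield) (ell : vfield) (ell2 : sfield)
  (P : tfield) (nv : vfield) (n2 : sfield) : Prop :=
  [/\ (forall a b, smooth (gam a b)) /\ (forall a, smooth (ell a)) /\ smooth ell2,
      (forall a b x, gam a b x = gam b a x),
      (forall x, \det (Amx gam ell ell2 x) != 0),
      (forall a b x, P a b x = P b a x) &
      [/\ forall a x, \sum_b gam a b x * nv b x + n2 x * ell a x = 0,
          forall x, \sum_a ell a x * nv a x + n2 x * ell2 x = 1,
          forall a x, \sum_b P a b x * ell b x + ell2 x * nv a x = 0 &
          forall a b x, \sum_c P a c x * gam c b x + ell b x * nv a x
                        = (a == b)%:R ] ].

Definition null_data gam ell ell2 P nv n2 : Prop :=
  hypersurface_data gam ell ell2 P nv n2 /\ forall x, n2 x = 0.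

Definition Ut (gam : tfield) (nv : vfield) : tfield :=
  fun a b x => 2^-1 * lie2 nv gam a b x.
Definition Ft (ell : vfield) : tfield :=
  fun a b x => 2^-1 * (partial a (ell b) x - partial b (ell a) x).
Definition sv (ell : vfield) (nv : vfield) : vfield :=
  fun a x => \sum_b nv b x * Ft ell b a x.
Definition contr (th : vfield) (V : vfield) : sfield :=
  fun x => \sum_a th a x * V a x.
Definition raise (P : tfield) (th : vfield) : vfield :=
  fun b x => \sum_c P b c x * th c x.
Definition scalev (f : sfield) (V : vfield) : vfield := fun a x => f x * V a x.

End Defs.

(* Main.v *)
Require Import Defs.
From HB Require Import structures.
From mathcomp Require Import all_boot all_order all_algebra.
From mathcomp Require Import all_classical all_reals all_analysis.
Import Order.TTheory GRing.Theory Num.Theory.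
Import numFieldNormedType.Exports.
From mathcomp Require Import ring.
Local Open Scope ring_scope.

Set Implicit Arguments. Unset Strict Implicit.
Section Help.
Variables (R : realType) (d : nat).
Local Notation pt := 'rV[R]_d.
Definition Df (f : sfield R d) := forall x, differentiable f x.

Lemma smooth_Df f : smooth f -> Df f.
Proof. by move=> h; case: (h 1%N). Qed.

Lemma DfM f g : Df f -> Df g -> Df (fun y => f y * g y).
Proof. move=> hf hg x; exact: (differentiableM (hf x) (hg x)). Qed.

Lemma DfD f g : Df f -> Df g -> Df (fun y => f y + g y).
Proof. move=> hf hg x; exact: (differentiableD (hf x) (hg x)). Qed.

Lemma DfS n (F : 'I_n -> sfield R d) : (forall k, Df (F k)) -> Df (fun y => \sum_k F k y).
Proof.
move=> h x; have := differentiable_sum (fun k => h k x).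
by rewrite fct_sumE.
Qed.

Lemma pM i f g x : Df f -> Df g ->
  partial i (fun y => f y * g y) x = f x * partial i g x + g x * partial i f x.
Proof.
move=> hf hg; rewrite /partial.
have := deriveM (diff_derivable (v:=delta_mx 0 i) (hf x)) (diff_derivable (v:=delta_mx 0 i) (hg x)).
by [].
Qed.

Lemma pD i f g x : Df f -> Df g ->
  partial i (fun y => f y + g y) x = partial i f x + partial i g x.
Proof.
move=> hf hg; rewrite /partial.
have := deriveD (diff_derivable (v:=delta_mx 0 i) (hf x)) (diff_derivable (v:=delta_mx 0 i) (hg x)).
by [].
Qed.

Lemma pS i n (F : 'I_n -> sfield R d) x : (forall k, Df (F k)) ->
  partial i (fun y => \sum_k F k y) x = \sum_k partial i (F k) x.
Proof.
move=> h; rewrite /partial.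
have := derive_sum (fun k => diff_derivable (v:=delta_mx 0 i) (h k x)).
by rewrite fct_sumE.
Qed.

Lemma pC i (f : sfield R d) c x : (forall y, f y = c) -> partial i f x = 0.
Proof.
move=> h; rewrite /partial.
have -> : f = cst c by apply/funext.
exact: derive_cst.
Qed.

Lemma pE i (f g : sfield R d) x : (forall y, f y = g y) -> partial i f x = partial i g x.
Proof. by move=> h; have -> : f = g by apply/funext. Qed.
End Help.

Section Alg.
Variables (R : numFieldType) (d : nat).
Local Notation I := ('I_d).
Variables (n t l : I -> R) (g P : I -> I -> R) (dg dP : I -> I -> I -> R)
  (dn dt dl : I -> I -> R) (h : R).
Hypotheses (gs : forall a b, g a b = g b a) (Ps : forall a b, P a b = P b a)
  (dgs : forall k a b, dg k a b = dg k b a) (dPs : forall k a b, dP k a b = dP k b a)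
  (h1 : forall a, \sum_b g a b * n b = 0)
  (h3 : forall a b, \sum_c P a c * g c b + l b * n a = (a == b)%:R)
  (dh1 : forall a c, \sum_b (g a b * dn c b + n b * dg c a b) = 0)
  (dh2 : forall a, \sum_e (l e * dn a e + n e * dl a e) = 0)
  (dh5 : forall b e a, \sum_c (P e c * dg b c a + g c a * dP b e c)
                       + (l a * dn b e + n e * dl b a) = 0).

Let X c := \sum_e P c e * t e.
Let dX k c := \sum_e (P c e * dt k e + t e * dP k c e).
Let tn := \sum_e t e * n e.

Lemma sum_delta (F : I -> R) a : \sum_e F e * (e == a)%:R = F a.
Proof.
rewrite (bigD1 a) //= eqxx mulr1 big1 ?addr0 // => e /negbTE ->; by rewrite mulr0.
Qed.

Lemma T2 a : \sum_b n b * \sum_c (g c b * dX a c) = 0.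
Proof.
under eq_bigr => b _ do rewrite mulr_sumr.
rewrite exchange_big /=; apply: big1 => c _.
transitivity (dX a c * \sum_b g c b * n b); last by rewrite h1 mulr0.
rewrite mulr_sumr; apply: eq_bigr => b _; ring.
Qed.

Lemma T3b a b : \sum_c g a c * dX b c =
  dt b a - l a * (\sum_e n e * dt b e) - \sum_e t e * \sum_c P e c * dg b c a
  - l a * (\sum_e t e * dn b e) - dl b a * tn.
Proof.
transitivity (\sum_e (dt b e * (\sum_c P e c * g c a) + t e * \sum_c g c a * dP b e c)).
  rewrite /dX; under eq_bigr => c _ do rewrite mulr_sumr.
  rewrite exchange_big /=; apply: eq_bigr => e _.
  rewrite !mulr_sumr -big_split /=; apply: eq_bigr => c _.
  rewrite (Ps e c) (gs c a) (dPs b e c); ring.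
transitivity (\sum_e (dt b e * ((e == a)%:R - l a * n e) + t e *
   (- (\sum_c P e c * dg b c a) - l a * dn b e - n e * dl b a))).
  apply: eq_bigr => e _.
  have := h3 e a; have := dh5 b e a; rewrite big_split /=.
  set A := \sum_c P e c * dg b c a; set B := \sum_c g c a * dP b e c.
  set C := \sum_c P e c * g c a => E5 E3.
  have -> : C = (e == a)%:R - l a * n e by rewrite -E3; ring.
  have -> : B = - A - l a * dn b e - n e * dl b a by rewrite -[LHS]subr0 -E5; ring.
  done.
rewrite /tn.
transitivity (\sum_e (dt b e * (e == a)%:R) - \sum_e l a * (n e * dt b e)
  - \sum_e t e * \sum_c P e c * dg b c a - \sum_e l a * (t e * dn b e)
  - \sum_e dl b a * (t e * n e)).
  rewrite -!sumrB; apply: eq_bigr => e _; ring.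
by rewrite sum_delta -!mulr_sumr.
Qed.

Lemma XgE e : \sum_b X b * g e b = t e - tn * l e.
Proof.
transitivity (\sum_c t c * \sum_b P c b * g b e).
  rewrite /X; under eq_bigr => b _ do rewrite mulr_suml.
  rewrite exchange_big /=; apply: eq_bigr => c _; rewrite mulr_sumr.
  apply: eq_bigr => b _; rewrite (Ps c b) (gs e b); ring.
transitivity (\sum_c (t c * (c == e)%:R - l e * (t c * n c))).
  apply: eq_bigr => c _; have := h3 c e.
  set C := \sum_c0 _ => E3; have -> : C = (c == e)%:R - l e * n c by rewrite -E3; ring.
  ring.
rewrite sumrB sum_delta -mulr_sumr /tn; ring.
Qed.

Lemma alg a :
 \sum_b n b * \sum_c (X c * dg c a b + g c b * dX a c + g a c * dX b c)
 = \sum_c (n c * dt c a + t c * dn a c)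
   - (\sum_c n c * \sum_e (t e * dn c e + n e * dt c e)) * l a
   - 2 * (tn * (\sum_b n b * (2^-1 * (dl b a - dl a b)))
          + \sum_b \sum_c P b c * (2^-1 * \sum_e (n e * dg e a b + g e b * dn a e + g a e * dn b e)) * t c).
Proof.
set A1 := \sum_b n b * dt b a.
set A2 := \sum_c t c * dn a c.
set A3 := \sum_b n b * \sum_e n e * dt b e.
set A4 := \sum_b n b * \sum_e t e * dn b e.
set A5 := \sum_b n b * dl b a.
set A6 := \sum_b n b * dl a b.
set B1 := \sum_b n b * \sum_c X c * dg c a b.
set B2 := \sum_b n b * \sum_e t e * \sum_c P e c * dg b c a.
set B3 := \sum_b X b * \sum_e g a e * dn b e.
set B4 := \sum_b X b * \sum_e g e b * dn a e.
set B5 := \sum_b X b * \sum_e n e * dg e a b.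
have FL : \sum_b n b * \sum_c (X c * dg c a b + g c b * dX a c + g a c * dX b c)
   = B1 + (A1 - l a * A3 - B2 - l a * A4 - tn * A5).
  transitivity (B1 + \sum_b n b * \sum_c (g c b * dX a c) + \sum_b n b * \sum_c (g a c * dX b c)).
    rewrite /B1 -!big_split; by apply: eq_bigr => b _; rewrite !big_split /= !mulrDr.
  rewrite T2 addr0; congr (_ + _).
  under eq_bigr => b _ do rewrite T3b.
  transitivity (\sum_b n b * dt b a - \sum_b l a * (n b * \sum_e n e * dt b e)
    - \sum_b n b * (\sum_e t e * \sum_c P e c * dg b c a)
    - \sum_b l a * (n b * \sum_e t e * dn b e) - \sum_b tn * (n b * dl b a)).
    rewrite -!sumrB; apply: eq_bigr => b _; ring.
  by rewrite -!mulr_sumr.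
have FR1 : \sum_c (n c * dt c a + t c * dn a c) = A1 + A2 by rewrite big_split.
have FR2 : \sum_c n c * \sum_e (t e * dn c e + n e * dt c e) = A4 + A3.
  by rewrite -big_split; apply: eq_bigr => c _; rewrite big_split mulrDr.
have FR3 : \sum_b n b * (2^-1 * (dl b a - dl a b)) = 2^-1 * (A5 - A6).
  transitivity (\sum_b 2^-1 * (n b * dl b a - n b * dl a b)).
    by apply: eq_bigr => b _; ring.
  by rewrite -mulr_sumr sumrB.
have FR4 : \sum_b \sum_c P b c * (2^-1 * \sum_e (n e * dg e a b + g e b * dn a e + g a e * dn b e)) * t c
   = 2^-1 * (B5 + B4 + B3).
  transitivity (\sum_b 2^-1 * (X b * \sum_e (n e * dg e a b + g e b * dn a e + g a e * dn b e))).
    apply: eq_bigr => b _; rewrite /X mulr_suml [RHS]mulr_sumr; apply: eq_bigr => c _; ring.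
  rewrite -mulr_sumr; congr (_ * _); rewrite /B5 /B4 /B3 -!big_split.
  by apply: eq_bigr => b _; rewrite !big_split /= !mulrDr.
have E52 : B5 = B2.
  have -> : B2 = \sum_x \sum_y \sum_z (n x * t y * P y z * dg x z a).
    apply: eq_bigr => x _; rewrite mulr_sumr; apply: eq_bigr => y _.
    rewrite !mulr_sumr; apply: eq_bigr => z _; ring.
  have -> : B5 = \sum_z \sum_y \sum_x (n x * t y * P y z * dg x z a).
    apply: eq_bigr => z _; rewrite /X mulr_suml; apply: eq_bigr => y _.
    rewrite !mulr_sumr; apply: eq_bigr => x _; rewrite (Ps z y) (dgs x a z); ring.
  symmetry; transitivity (\sum_x \sum_z \sum_y (n x * t y * P y z * dg x z a)).
    by apply: eq_bigr => x _; rewrite exchange_big.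
  rewrite [LHS]exchange_big /=; apply: eq_bigr => z _; by rewrite exchange_big.
have E13 : B1 = - B3.
  transitivity (\sum_c X c * \sum_b n b * dg c a b).
    rewrite /B1; under eq_bigr => b _ do rewrite mulr_sumr.
    rewrite exchange_big /=; apply: eq_bigr => c _; rewrite mulr_sumr.
    by apply: eq_bigr => b _; ring.
  rewrite /B3 -sumrN; apply: eq_bigr => c _.
  have := dh1 a c; rewrite big_split /=.
  set U := \sum_b n b * dg c a b; set V := \sum_b g a b * dn c b => E.
  have -> : U = - V by rewrite -[LHS]subr0 -E; ring.
  ring.
have E4 : B4 = A2 + tn * A6.
  transitivity (\sum_e dn a e * (t e - tn * l e)).
    rewrite /B4; under eq_bigr => b _ do rewrite mulr_sumr.
    rewrite exchange_big /=; apply: eq_bigr => e _; rewrite -XgE mulr_sumr.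
    by apply: eq_bigr => b _; ring.
  transitivity (A2 - tn * \sum_e l e * dn a e).
    rewrite /A2 mulr_sumr -sumrB; apply: eq_bigr => e _; ring.
  have := dh2 a; rewrite big_split /=.
  set U := \sum_e l e * dn a e; set V := \sum_e n e * dl a e => E.
  have -> : U = - V by rewrite -[LHS]subr0 -E; ring.
  rewrite /A6 -/V; ring.
rewrite FL FR1 FR2 FR3 FR4 E52 E13 E4.
by field.
Qed.

Lemma T2g (D : I -> R) : \sum_b n b * \sum_c (g c b * D c) = 0.
Proof.
under eq_bigr => b _ do rewrite mulr_sumr.
rewrite exchange_big /=; apply: big1 => c _.
transitivity (D c * \sum_b g c b * n b); last by rewrite h1 mulr0.
rewrite mulr_sumr; apply: eq_bigr => b _; ring.
Qed.

Lemma alg2 (F : R) (dF : I -> R) a :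
  \sum_b n b * \sum_c (F * n c * dg c a b + g c b * (F * dn a c + n c * dF a)
                      + g a c * (F * dn b c + n c * dF b)) = 0.
Proof.
transitivity (\sum_b n b * \sum_c (F * n c * dg c a b)
  + \sum_b n b * \sum_c (g c b * (F * dn a c + n c * dF a))
  + \sum_b n b * \sum_c (g a c * (F * dn b c + n c * dF b))).
  by rewrite -!big_split; apply: eq_bigr => b _; rewrite !big_split /= !mulrDr.
rewrite T2g addr0.
have E1 : \sum_b n b * \sum_c (F * n c * dg c a b)
    = - (F * \sum_c n c * \sum_b g a b * dn c b).
  transitivity (F * \sum_c n c * \sum_b n b * dg c a b).
    rewrite mulr_sumr; under eq_bigr => b _ do rewrite mulr_sumr.
    rewrite exchange_big /=; apply: eq_bigr => c _; rewrite !mulr_sumr.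
    by apply: eq_bigr => b _; ring.
  rewrite -mulrN -sumrN; congr (_ * _); apply: eq_bigr => c _.
  have := dh1 a c; rewrite big_split /=.
  set U := \sum_b n b * dg c a b; set V := \sum_b g a b * dn c b => E.
  have -> : U = - V by rewrite -[LHS]subr0 -E; ring.
  ring.
have E3 : \sum_b n b * \sum_c (g a c * (F * dn b c + n c * dF b))
    = F * \sum_b n b * \sum_c g a c * dn b c.
  rewrite mulr_sumr; apply: eq_bigr => b _.
  have : \sum_c g a c * n c = 0 by apply: h1.
  set U := \sum_c g a c * n c => E.
  transitivity (n b * (F * \sum_c g a c * dn b c + dF b * U)).
    congr (_ * _); rewrite /U !mulr_sumr -big_split; apply: eq_bigr => c _ /=; ring.
  rewrite E; ring.
by rewrite E1 E3 addrC subrr.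
Qed.
End Alg.

Unset Implicit Arguments. Set Strict Implicit.
Theorem lemmaC3 (R : realType) (d : nat)
  (gam : tfield R d) (ell : vfield R d) (ell2 : sfield R d)
  (P : tfield R d) (nv : vfield R d) (n2 : sfield R d)
  (th : vfield R d) (f : sfield R d) :
  null_data gam ell ell2 P nv n2 ->
  (forall a b, smooth (P a b)) -> (forall a, smooth (nv a)) ->
  (forall a, smooth (th a)) -> smooth f ->
  let X := raise P th in
  (forall a x,
     \sum_b nv b x * lie2 X gam a b x
     = lie1 nv th a x - lie0 nv (contr th nv) x * ell a x
       - 2 * (contr th nv x * sv ell nv a x
              + \sum_b \sum_c P b c x * Ut gam nv a b x * th c x))
  /\ (forall a x, \sum_b nv b x * lie2 (scalev f nv) gam a b x = 0).
Proof.
move=> [[[sg [sl sl2]] gsym det Psym [H1 H2 H3 H4]] hn2] sP sn st sf X.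
have Dg : forall a b, Df (gam a b) by move=> a b; apply: smooth_Df.
have Dl : forall a, Df (ell a) by move=> a; apply: smooth_Df.
have DP : forall a b, Df (P a b) by move=> a b; apply: smooth_Df.
have Dn : forall a, Df (nv a) by move=> a; apply: smooth_Df.
have Dt : forall a, Df (th a) by move=> a; apply: smooth_Df.
have Dff : Df f by apply: smooth_Df.
have E1 : forall a y, \sum_b gam a b y * nv b y = 0.
  by move=> a y; rewrite -[RHS](H1 a y) hn2 mul0r addr0.
have E2 : forall y, \sum_b ell b y * nv b y = 1.
  by move=> y; rewrite -[RHS](H2 y) hn2 mul0r addr0.
have gs : forall x a b, gam a b x = gam b a x by move=> x a b; apply: gsym.
have Ps : forall x a b, P a b x = P b a x by move=> x a b; apply: Psym.
have dgs : forall x k a b, partial k (gam a b) x = partial k (gam b a) x.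
  by move=> x k a b; apply: pE => y; apply: gsym.
have dPs : forall x k a b, partial k (P a b) x = partial k (P b a) x.
  by move=> x k a b; apply: pE => y; apply: Psym.
have dh1 : forall x a c, \sum_b (gam a b x * partial c (nv b) x
                                + nv b x * partial c (gam a b) x) = 0.
  move=> x a c.
  rewrite -[RHS](pC c (f := fun y => \sum_b gam a b y * nv b y) x (E1 a)).
  rewrite (pS c (F := fun b y => gam a b y * nv b y) x); last by move=> b; apply: DfM.
  by apply: eq_bigr => b _; rewrite pM.
have dh2 : forall x a, \sum_e (ell e x * partial a (nv e) x
                               + nv e x * partial a (ell e) x) = 0.
  move=> x a.
  rewrite -[RHS](pC a (f := fun y => \sum_b ell b y * nv b y) x E2).
  rewrite (pS a (F := fun b y => ell b y * nv b y) x); last by move=> b; apply: DfM.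
  by apply: eq_bigr => b _; rewrite pM.
have dh5 : forall x b e a,
    \sum_c (P e c x * partial b (gam c a) x + gam c a x * partial b (P e c) x)
    + (ell a x * partial b (nv e) x + nv e x * partial b (ell a) x) = 0.
  move=> x b e a.
  rewrite -[RHS](pC b (f := fun y => \sum_c P e c y * gam c a y + ell a y * nv e y) x (H4 e a)).
  rewrite (pD b (f := fun y => \sum_c P e c y * gam c a y) (g := fun y => ell a y * nv e y) x);
    last 2 first.
  - by apply: DfS => c; apply: DfM.
  - by apply: DfM.
  rewrite (pS b (F := fun c y => P e c y * gam c a y) x); last by move=> c; apply: DfM.
  by rewrite pM //; congr (_ + _); apply: eq_bigr => c _; rewrite pM.
split.
- move=> a x.
  have dX : forall k c, partial k (X c) x
      = \sum_e (P c e x * partial k (th e) x + th e x * partial k (P c e) x).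
    move=> k c; rewrite /X /raise.
    rewrite (pS k (F := fun e y => P c e y * th e y) x); last by move=> e; apply: DfM.
    by apply: eq_bigr => e _; rewrite pM.
  have dC : forall c, partial c (contr th nv) x
      = \sum_e (th e x * partial c (nv e) x + nv e x * partial c (th e) x).
    move=> c; rewrite /contr.
    rewrite (pS c (F := fun e y => th e y * nv e y) x); last by move=> e; apply: DfM.
    by apply: eq_bigr => e _; rewrite pM.
  rewrite /lie2 /lie0.
  under eq_bigr => b _ do under eq_bigr => c _ do rewrite !dX.
  under [in RHS]eq_bigr => c _ do rewrite dC.
  exact: (alg (n := fun b => nv b x) (l := fun a => ell a x)
    (g := fun a b => gam a b x) (P := fun a b => P a b x)
    (dg := fun k a b => partial k (gam a b) x) (dP := fun k a b => partial k (P a b) x)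
    (dn := fun k b => partial k (nv b) x)
    (dl := fun k a => partial k (ell a) x) (fun e => th e x) (fun k e => partial k (th e) x) (gs x) (Ps x) (dgs x) (dPs x) (fun a => E1 a x) (fun a b => H4 a b x)
            (dh1 x) (dh2 x) (dh5 x) a).
- move=> a x.
  have dS : forall k c, partial k (scalev f nv c) x
      = f x * partial k (nv c) x + nv c x * partial k f x.
    by move=> k c; rewrite /scalev pM.
  rewrite /lie2.
  under eq_bigr => b _ do under eq_bigr => c _ do rewrite !dS.
  exact: (alg2 (n := fun b => nv b x) (g := fun a b => gam a b x)
    (dg := fun k a b => partial k (gam a b) x) (dn := fun k b => partial k (nv b) x) (fun a => E1 a x) (dh1 x) (f x) (fun k => partial k f x) a).
Qed.
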